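(* Let $\overrightarrow{W}$ be a Morse sequence on a simplicial complex $K$. Then for every $p$, $\widehat{\partial}_p\circ\widehat{\partial}_{p+1}=0$ and $\widehat{\delta}_{p+1}\circ\widehat{\delta}_p=0$.
   Context: A simplicial complex $K$ is a finite collection of non-empty finite sets closed under taking non-empty subsets; $\dim\sigma=|\sigma|-1$, $K^{(p)}$ the set of $p$-simplices. A pair $(\sigma,\tau)$ with $\sigma\subsetneq\tau$ is a free pair for $K$ if $\tau$ is the only simplex other than $\sigma$ containing $\sigma$; $K$ is then an elementary expansion of $K\setminus\{\sigma,\tau\}$. If $\nu$ is a facet (maximal simplex) of $K$, $K$ is an elementary filling of $K\setminus\{\nu\}$. A Morse sequence on $K$ is a sequence $\langle\emptyset=K_0,\dots,K_k=K\rangle$ with each $K_i$ an elementary expansion or filling of $K_{i-1}$; simplices added by fillings are critical; for an expansion $K_i=K_{i-1}\cup\{\sigma,\tau\}$, $\sigma\subset\tau$, $(\sigma,\tau)$ is a regular pair, $\sigma$ lower regular, $\tau$ upper regular. $\widehat W$ is the set of critical simplices. $K[p]$ is the $\mathbb{Z}_2$-vector space of subsets of $K^{(p)}$ (sum = symmetric difference, $0=\emptyset$), $\widehat W[p]=\{c\in K[p]:c\subseteq\widehat W\}$. For $\sigma\in K^{(p)}$, $\partial(\sigma)=\{\tau\in K^{(p-1)}:\tau\subset\sigma\}$, $\delta(\sigma)=\{\tau\in K^{(p+1)}:\sigma\subset\tau\}$, with linear extensions $\partial_p,\delta_p$. The reference map $\curlywedge$ is the unique map assigning to each $p$-simplex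 an element of $\widehat W[p]$, extended linearly, with $\curlywedge(\nu)=\{\nu\}$ for critical $\nu$ and $\curlywedge(\tau)=0=\curlywedge(\partial(\tau))$ for upper regular $\tau$; the coreference map $\curlyvee$ is the unique such map with $\curlyvee(\nu)=\{\nu\}$ for critical $\nu$ and $\curlyvee(\sigma)=0=\curlyvee(\delta(\sigma))$ for lower regular $\sigma$. The linear maps $\widehat\partial_p:\widehat W[p]\to\widehat W[p-1]$ and $\widehat\delta_p:\widehat W[p]\to\widehat W[p+1]$ are $\widehat\partial_p(c)=\curlywedge(\partial_p(c))$, $\widehat\delta_p(c)=\curlyvee(\delta_p(c))$. *)

(* Defs.v *)
From mathcomp Require Import all_boot.
Set Implicit Arguments. Unset Strict Implicit. Unset Printing Implicit Defensive.

Section Defs.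
Variable V : finType.
Notation simplex := {set V}.
Notation cplx := {set {set V}}.

Definition complex (K : cplx) : Prop :=
  set0 \notin K /\
  (forall s t : simplex, s \in K -> t \subset s -> t != set0 -> t \in K).

Definition free_pair (K : cplx) (sigma tau : simplex) : Prop :=
  [/\ sigma \proper tau, sigma \in K, tau \in K &
      forall u, u \in K -> sigma \subset u -> u = sigma \/ u = tau].

Definition facet (K : cplx) (nu : simplex) : Prop :=
  nu \in K /\ forall u, u \in K -> ~~ (nu \proper u).

Definition elem_expansion (Kprev Knext : cplx) (sigma tau : simplex) : Prop :=
  free_pair Knext sigma tau /\ Kprev = Knext :\: [set sigma; tau].

Definition elem_filling (Kprev Knext : cplx) (nu : simplex) : Prop :=
  facet Knext nu /\ Kprev = Knext :\ nu.

Definition morse_seq (K : cplx) (W : seq cplx) : Prop :=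
  [/\ 0 < size W, nth set0 W 0 = set0, last set0 W = K,
      (forall i, i < size W -> complex (nth set0 W i)) &
      (forall i, 0 < i < size W ->
         (exists sigma tau, elem_expansion (nth set0 W i.-1) (nth set0 W i) sigma tau)
         \/ (exists nu, elem_filling (nth set0 W i.-1) (nth set0 W i) nu))].

Definition critical (W : seq cplx) (nu : simplex) : Prop :=
  exists i, 0 < i < size W /\ elem_filling (nth set0 W i.-1) (nth set0 W i) nu.

Definition regular_pair (W : seq cplx) (sigma tau : simplex) : Prop :=
  exists i, 0 < i < size W /\ elem_expansion (nth set0 W i.-1) (nth set0 W i) sigma tau.

Definition upper_regular (W : seq cplx) (tau : simplex) : Prop :=
  exists sigma, regular_pair W sigma tau.

Definition lower_regular (W : seq cplx) (sigma : simplex) : Prop :=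
  exists tau, regular_pair W sigma tau.

(* Z_2-linear extension of f : simplex -> chain to chains: the sum (symmetric
   difference) of the f s, s in c; x lies in it iff it lies in an odd number
   of the f s. *)
Definition lin (f : simplex -> cplx) (c : cplx) : cplx :=
  [set x | odd #|[set s in c | x \in f s]|].

Definition bdry (K : cplx) (s : simplex) : cplx :=
  [set t in K | (t \proper s) && (#|t| == #|s|.-1)].
Definition cobdry (K : cplx) (s : simplex) : cplx :=
  [set t in K | (s \proper t) && (#|t| == #|s|.+1)].

Definition hatW (K : cplx) (W : seq cplx) (p : nat) (c : cplx) : Prop :=
  forall x, x \in c -> [/\ x \in K, #|x| = p.+1 & critical W x].

Definition is_reference_map (K : cplx) (W : seq cplx) (r : simplex -> cplx) : Prop :=
  [/\ (forall s, s \in K -> forall x, x \in r s -> [/\ x \in K, #|x| = #|s| & critical W x]),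
      (forall nu, critical W nu -> r nu = [set nu]) &
      (forall tau, upper_regular W tau -> r tau = set0 /\ lin r (bdry K tau) = set0)].

Definition is_coreference_map (K : cplx) (W : seq cplx) (r : simplex -> cplx) : Prop :=
  [/\ (forall s, s \in K -> forall x, x \in r s -> [/\ x \in K, #|x| = #|s| & critical W x]),
      (forall nu, critical W nu -> r nu = [set nu]) &
      (forall sigma, lower_regular W sigma -> r sigma = set0 /\ lin r (cobdry K sigma) = set0)].

Definition hat_bdry (K : cplx) (ref : simplex -> cplx) (c : cplx) : cplx :=
  lin ref (lin (bdry K) c).
Definition hat_cobdry (K : cplx) (coref : simplex -> cplx) (c : cplx) : cplx :=
  lin coref (lin (cobdry K) c).

End Defs.

(* Main.v *)
Require Import Defs.
From mathcomp Require Import all_boot zify.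
Set Implicit Arguments. Unset Strict Implicit. Unset Printing Implicit Defensive.

Lemma odd_card (T : finType) (P : pred T) :
  odd #|[set a | P a]| = \big[addb/false]_a P a.
Proof.
rewrite -sum1_card big_mkcond /=.
rewrite (big_morph odd oddD (erefl (odd 0))).
by apply: eq_bigr => i _; rewrite inE; case: (P i).
Qed.

Section Lin.
Variable V : finType.
Notation simplex := {set V}.
Notation cplx := {set {set V}}.

Lemma inlin (f : simplex -> cplx) (c : cplx) x :
  (x \in lin f c) = \big[addb/false]_s ((s \in c) && (x \in f s)).
Proof. by rewrite inE odd_card. Qed.

Lemma andb_bigx (b : bool) (I : finType) (F : I -> bool) :
  b && \big[addb/false]_i F i = \big[addb/false]_i (b && F i).
Proof.
by rewrite (big_morph (andb b) (andb_addr b) (andbF b)).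
Qed.

Lemma lin_comp (f g : simplex -> cplx) (c : cplx) :
  lin g (lin f c) = lin (fun s => lin g (f s)) c.
Proof.
apply/setP => x; rewrite inlin [RHS]inlin.
rewrite (eq_bigr (fun t => \big[addb/false]_s ((x \in g t) && ((s \in c) && (t \in f s))))); last by move=> t _; rewrite inlin andbC andb_bigx.
rewrite exchange_big /=.
apply: eq_bigr => s _; rewrite inlin andb_bigx.
by apply: eq_bigr => t _; case: (x \in g t); case: (s \in c); case: (t \in f s).
Qed.

Lemma lin_ext (f g : simplex -> cplx) (c : cplx) :
  {in c, f =1 g} -> lin f c = lin g c.
Proof.
move=> fg; apply/setP => x; rewrite !inlin; apply: eq_bigr => s _.
by case sc: (s \in c) => //=; rewrite fg.
Qed.

Lemma lin0 (f : simplex -> cplx) : lin f set0 = set0.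
Proof.
apply/setP => x; rewrite inlin inE big1 // => s _; by rewrite inE.
Qed.

Lemma lin_zero (f : simplex -> cplx) (c : cplx) :
  {in c, forall s, f s = set0} -> lin f c = set0.
Proof.
move=> h; rewrite (@lin_ext f (fun _ => set0)) //.
apply/setP => x; rewrite inlin in_set0 big1 // => s _ /=; by rewrite andbF.
Qed.

Lemma lin1 (f : simplex -> cplx) s : lin f [set s] = f s.
Proof.
apply/setP => x; rewrite inlin (bigD1 s) //= inE eqxx /= big1 ?addbF // => t.
by rewrite inE => /negbTE ->.
Qed.

Lemma inlinD1 (f : simplex -> cplx) (c : cplx) s x : s \in c ->
  (x \in lin f c) = (x \in f s) (+) (x \in lin f (c :\ s)).
Proof.
move=> sc; rewrite !inlin (bigD1 s) //= sc /=; congr addb.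
rewrite big_mkcond /=; apply: eq_bigr => t _; rewrite in_setD1.
by case: (t =P s).
Qed.

Lemma lin_split0 (f : simplex -> cplx) (c : cplx) s : lin f c = set0 -> s \in c ->
  f s = lin f (c :\ s).
Proof.
move=> h sc; apply/setP => x.
have := inlinD1 f x sc; rewrite h inE.
by case: (x \in f s); case: (x \in lin f (c :\ s)).
Qed.

Lemma inlinP (f : simplex -> cplx) (c : cplx) x : x \in lin f c -> exists2 s, s \in c & x \in f s.
Proof.
rewrite inE => h; case: (set_0Vmem [set s in c | x \in f s]) => [e|[s]].
  by rewrite e cards0 in h.
by rewrite inE => /andP[]; exists s.
Qed.

End Lin.

Section Comb.
Variable V : finType.
Notation simplex := {set V}.
Notation cplx := {set {set V}}.

Lemma mid2_card (a b t : simplex) : #|b| = #|a|.+2 ->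
  a \proper t -> t \proper b -> #|t| = #|a|.+1.
Proof.
move=> hb; rewrite !properEcard => /andP[_ h1] /andP[_ h2]; lia.
Qed.

Lemma mid2 (a b : simplex) : a \subset b -> #|b| = #|a|.+2 ->
  #|[set t : simplex | a \proper t & t \proper b]| = 2.
Proof.
move=> ab hb.
have -> : [set t : simplex | a \proper t & t \proper b] = [set v |: a | v in b :\: a].
  apply/setP => t; rewrite inE; apply/andP/imsetP.
  - move=> [h1 h2]; have := h1 => /properP[_ [v vt va]].
    exists v; first by rewrite inE va (subsetP (proper_sub h2)).
    apply/eqP; rewrite eq_sym eqEcard subUset sub1set vt (proper_sub h1) /=.
    rewrite cardsU1 va (mid2_card hb h1 h2) //.
  - move=> [v]; rewrite inE => /andP[va vb] ->; rewrite !properEcard.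
    rewrite subsetUr cardsU1 va /= subUset sub1set vb ab /= hb; lia.
rewrite card_in_imset; last first.
  move=> v w; rewrite !inE => /andP[va _] /andP[wa _] e.
  have : v \in w |: a by rewrite -e setU11.
  by rewrite in_setU1 (negbTE va) orbF => /eqP.
by rewrite cardsDS // hb; lia.
Qed.

Lemma nonempty_of_proper (a t : simplex) : a \proper t -> t != set0.
Proof.
move=> /properP[_ [v vt _]]; apply/set0Pn; by exists v.
Qed.

Lemma dd_bdry (K : cplx) s : complex K -> s \in K ->
  lin (bdry K) (bdry K s) = set0.
Proof.
move=> [K0 Kc] sK; apply/setP => x; rewrite inE in_set0.
case: (set_0Vmem [set t in bdry K s | x \in bdry K t]) => [->|[t0]].
  by rewrite cards0.
rewrite !inE => /andP[/and3P[t0K t0s /eqP ct0] /and3P[xK xt0 /eqP cx]].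
have hs : #|s| = #|x|.+2.
  move: t0s xt0; rewrite !properEcard => /andP[_ h1] /andP[_ h2]; lia.
have -> : [set t in bdry K s | x \in bdry K t] = [set t : simplex | x \proper t & t \proper s].
  apply/setP => t; rewrite !inE; apply/idP/idP.
    by move=> /andP[/and3P[_ -> _] /and3P[_ -> _]].
  move=> /andP[xt ts]; have ct := mid2_card hs xt ts.
  rewrite xt ts xK (Kc s t sK (proper_sub ts) (nonempty_of_proper xt)) /=.
  apply/andP; split; apply/eqP; lia.
rewrite mid2 //; apply: proper_sub; exact: proper_trans xt0 t0s.
Qed.

Lemma dd_cobdry (K : cplx) s : complex K -> s \in K ->
  lin (cobdry K) (cobdry K s) = set0.
Proof.
move=> [K0 Kc] sK; apply/setP => x; rewrite inE in_set0.
case: (set_0Vmem [set t in cobdry K s | x \in cobdry K t]) => [->|[t0]].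
  by rewrite cards0.
rewrite !inE => /andP[/and3P[t0K st0 /eqP ct0] /and3P[xK t0x /eqP cx]].
have hs : #|x| = #|s|.+2 by lia.
have -> : [set t in cobdry K s | x \in cobdry K t] = [set t : simplex | s \proper t & t \proper x].
  apply/setP => t; rewrite !inE; apply/idP/idP.
    by move=> /andP[/and3P[_ -> _] /and3P[_ -> _]].
  move=> /andP[st tx]; have ct := mid2_card hs st tx.
  rewrite st tx xK (Kc x t xK (proper_sub tx) (nonempty_of_proper st)) /=.
  apply/andP; split; apply/eqP; lia.
rewrite mid2 //; apply: proper_sub; exact: proper_trans st0 t0x.
Qed.

Lemma free_codim (L : cplx) s t : complex L -> free_pair L s t -> #|t| = #|s|.+1.
Proof.
move=> [L0 Lc] [st sL tL fr].
have := st => /properP[sub [v vt vs]].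
have uL : v |: s \in L.
  apply: (Lc t) => //; first by rewrite subUset sub1set vt sub.
  apply/set0Pn; exists v; exact: setU11.
case: (fr _ uL (subsetUr _ _)) => e.
  by move: vs; rewrite -e setU11.
by rewrite -e cardsU1 vs.
Qed.

End Comb.

Section Gen.
Variable V : finType.
Notation simplex := {set V}.
Notation cplx := {set {set V}}.
Variables (r D : simplex -> cplx).
Let h t := lin r (D t).

Lemma pair_step a s : lin r (D a) = set0 -> s \in D a -> lin D (D a) = set0 ->
  {in D a :\ s, forall t, lin h (r t) = h t} -> lin h (r s) = h s.
Proof.
move=> h0 sa dd IH.
rewrite (lin_split0 h0 sa) lin_comp (lin_ext IH).
have hz : lin h (D a) = set0 by rewrite /h -lin_comp dd lin0.
by rewrite (lin_split0 hz sa).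
Qed.

Lemma final_assembly (K c : cplx) :
  {in K, forall s, lin h (r s) = h s} -> {in K, forall s, lin D (D s) = set0} ->
  (forall s, D s \subset K) -> c \subset K ->
  lin r (lin D (lin r (lin D c))) = set0.
Proof.
move=> P dd DK cK.
have dK : lin D c \subset K.
  apply/subsetP => x /inlinP [s _ xs]; exact: (subsetP (DK s)).
set d := lin D c.
have e1 : forall X, lin r (lin D X) = lin h X by move=> X; rewrite lin_comp.
rewrite e1 lin_comp (lin_ext (fun s sd => P s (subsetP dK s sd))) -e1 /d.
rewrite (lin_comp D D) (lin_zero (fun s sc => dd s (subsetP cK s sc))).
by rewrite lin0.
Qed.
End Gen.

Section Morse.
Variable V : finType.
Notation simplex := {set V}.
Notation cplx := {set {set V}}.
Variables (K : cplx) (W : seq cplx).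
Hypothesis HK : complex K.
Hypothesis HW : morse_seq K W.
Notation n := (size W).
Notation Ki i := (nth set0 W i).

Lemma mono i : i.+1 < n -> Ki i \subset Ki i.+1.
Proof.
case: HW => _ _ _ _ st hi.
have : 0 < i.+1 < n by rewrite hi.
move=> /st [[sg [tau [_ ->]]]|[nu [_ ->]]] /=; [exact: subsetDl | exact: subsetDl].
Qed.

Lemma subK i : i < n -> Ki i \subset K.
Proof.
case: HW => n0 _ lst _ _.
move=> hi; have [j hj] : exists j, i + j = n.-1 by exists (n.-1 - i); lia.
elim: j i hi hj => [|j IH] i hi hj.
  by rewrite addn0 in hj; rewrite hj nth_last lst.
apply: subset_trans (mono _) (IH i.+1 _ _); lia.
Qed.

Lemma step i s : i.+1 < n -> s \in Ki i.+1 -> s \notin Ki i ->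
  (exists sg tau, elem_expansion (Ki i) (Ki i.+1) sg tau /\ (s = sg \/ s = tau))
  \/ critical W s.
Proof.
case: HW => _ _ _ _ st hi sK sn.
have : 0 < i.+1 < n by rewrite hi.
move=> /st [[sg [tau [he e]]]|[nu [hf e]]] /=.
  left; exists sg, tau; split => //.
  move: sn; rewrite /= e !inE sK andbT negbK => /orP[] /eqP; auto.
right; move: sn; rewrite /= e !inE sK andbT negbK => /eqP ->.
by exists i.+1; split => //; rewrite hi.
Qed.

End Morse.

Section Claims.
Variable V : finType.
Notation simplex := {set V}.
Notation cplx := {set {set V}}.
Variables (K : cplx) (W : seq cplx).
Hypothesis HK : complex K.
Hypothesis HW : morse_seq K W.
Notation n := (size W).
Notation Ki i := (nth set0 W i).

Lemma bdry_claim ref : is_reference_map K W ref ->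
  forall i, i < n -> {in Ki i, forall s,
     lin (fun t => lin ref (bdry K t)) (ref s) = lin ref (bdry K s)}.
Proof.
move=> [_ Hc Hu].
have Wc := HW; case: Wc => _ W0 _ Wcx _.
elim => [|i IH] hi s.
  by rewrite W0 inE.
move=> sK.
case sI: (s \in Ki i); first by apply: IH => //; lia.
case: (step HW hi sK (negbT sI)) => [[sg [tau [[fp e0] [e|e]]]]|cs]; last first.
  by rewrite Hc // lin1.
- have ut : upper_regular W tau.
    by exists sg, i.+1; split; [by rewrite hi | by split].
  have [rt h0] := Hu _ ut.
  by rewrite e rt lin0 h0.
- have ut : upper_regular W tau.
    by exists sg, i.+1; split; [by rewrite hi | by split].
  have [rt h0] := Hu _ ut.
  have [st sgK tauK fr] := fp.
  have KK := subK HW hi.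
  have tK : tau \in K by exact: (subsetP KK).
  rewrite e; apply: (pair_step h0).
  + rewrite inE (subsetP KK _ sgK) st /= (free_codim (Wcx _ hi) fp) //.
  + exact: dd_bdry.
  + move=> t; rewrite !inE => /andP[tsg /and3P[tK' ttau _]].
    have tKi1 : t \in Ki i.+1.
      case: (Wcx _ hi) => _ Hc'; apply: (Hc' tau) => //; first exact: proper_sub.
      by apply/eqP => t0; case: HK => K0 _; move: K0; rewrite -t0 tK'.
    apply: IH; [lia|].
    rewrite e0 !inE tKi1 andbT; apply/norP; split => //.
    by apply/eqP => ett; move: ttau; rewrite ett properxx.
Qed.

Lemma cobdry_claim coref : is_coreference_map K W coref ->
  {in K, forall s,
     lin (fun t => lin coref (cobdry K t)) (coref s) = lin coref (cobdry K s)}.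
Proof.
move=> [_ Hc Hl].
have Wc := HW; case: Wc => n0 W0 lst Wcx _.
suff H : forall j i, i + j = n.-1 -> forall s, s \in K -> s \notin Ki i ->
     lin (fun t => lin coref (cobdry K t)) (coref s) = lin coref (cobdry K s).
  move=> s sK; apply: (H n.-1 0) => //; by rewrite W0 inE.
elim => [|j IH] i hij s sK sI.
  by move: sI; rewrite addn0 in hij; rewrite hij nth_last lst sK.
have hi : i.+1 < n by lia.
case sI1: (s \in Ki i.+1); last first.
  by apply: (IH i.+1) => //; [lia | rewrite sI1].
case: (step HW hi sI1 sI) => [[sg [tau [[fp e0] [e|e]]]]|cs]; last first.
  by rewrite Hc // lin1.
- have ls : lower_regular W sg.
    by exists tau, i.+1; split; [by rewrite hi | by split].
  have [rt h0] := Hl _ ls.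
  have [st sgK tauK fr] := fp.
  have KK := subK HW hi.
  have sgK' : sg \in K by exact: (subsetP KK).
  rewrite e; apply: (pair_step h0).
  + rewrite inE (subsetP KK _ tauK) st /= (free_codim (Wcx _ hi) fp) //.
  + exact: dd_cobdry.
  + move=> t; rewrite !inE => /andP[ttau /and3P[tK' sgt _]].
    apply: (IH i.+1) => //; first lia.
    apply/negP => tKi.
    case: (fr t tKi (proper_sub sgt)) => ett.
      by move: sgt; rewrite ett properxx.
    by move: ttau; rewrite ett eqxx.
- have ls : lower_regular W sg.
    by exists tau, i.+1; split; [by rewrite hi | by split].
  have [rt h0] := Hl _ ls.
  by rewrite e rt lin0 h0.
Qed.

End Claims.

Theorem proposition7 (V : finType) (K : {set {set V}}) (W : seq {set {set V}})
    (ref coref : {set V} -> {set {set V}}) :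
  complex K -> morse_seq K W ->
  is_reference_map K W ref -> is_coreference_map K W coref ->
  forall p : nat,
    (forall c, hatW K W p.+1 c -> hat_bdry K ref (hat_bdry K ref c) = set0) /\
    (forall c, hatW K W p c -> hat_cobdry K coref (hat_cobdry K coref c) = set0).
Proof.
move=> HK HW Hr Hc p; split => c hc.
- have cK : c \subset K by apply/subsetP => x /hc [].
  apply: final_assembly cK.
  + move=> s sK; apply: (bdry_claim HK HW Hr (i := (size W).-1)).
      by case: HW => n0 _ _ _ _; lia.
    by rewrite nth_last; case: HW => _ _ -> _ _.
  + by move=> s sK; apply: dd_bdry.
  + by move=> s; apply/subsetP => x; rewrite inE => /andP[].
- have cK : c \subset K by apply/subsetP => x /hc [].
  apply: final_assembly cK.
  + by move=> s sK; apply: (cobdry_claim HK HW Hc).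
  + by move=> s sK; apply: dd_cobdry.
  + by move=> s; apply/subsetP => x; rewrite inE => /andP[].
Qed.
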